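(* Let $\mathcal G\in\mathbb C^{M\times N}$ have columns $\mathbf g_1,\dots,\mathbf g_N$ with $\|\mathbf g_j\|_2=1$, let $\mathbf d\in\mathbb C^M$, $\gamma>0$, and $\mathscr L(\boldsymbol\rho)=\tfrac12\|\mathcal G\boldsymbol\rho-\mathbf d\|_2^2+\gamma\|\boldsymbol\rho\|_1$. Let $\mathscr S\subset\{1,\dots,N\}$ with complement $\mathscr S^c=\{1,\dots,N\}\setminus\mathscr S$, let $\mathcal S\subset\mathscr S$ be such that $\mathcal G_{\mathcal S}$ has full column rank, and let $r\in(0,1)$ be such that for every $l\in\mathscr S$ there is $q\in\mathcal S$ with $|\mathbf g_q^H\mathbf g_l|>1-r$. Let $\boldsymbol\rho_\star$ minimize $\mathscr L$ over all $\boldsymbol\rho\in\mathbb C^N$ with $\operatorname{supp}\boldsymbol\rho\subset\mathscr S$, and let $\boldsymbol\xi\in\partial\|\boldsymbol\rho_{\star\mathscr S}\|_1$ satisfy $\mathcal G_{\mathscr S}^H\mathcal G_{\mathscr S}(\boldsymbol\rho_{\star\mathscr S}-\mathcal G_{\mathscr S}^\dagger\mathbf d)+\gamma\boldsymbol\xi=\mathbf 0$. If $$\sqrt{2r}\,\|\boldsymbol\rho_{\star\mathscr S}-\mathcal G_{\mathscr S}^\dagger\mathbf d\|_1+\|\mathcal G_{\mathscr S^c}^H(\mathcal P_{\mathscr S}\mathbf d-\mathbf d)\|_\infty<\gamma\Big[1-\max_{j\in\mathscr S^c}\big|\boldsymbol\xi_{\mathcal S}^H\,\mathcal G_{\mathcal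 S}^\dagger\mathbf g_j\big|\Big],$$ then $\boldsymbol\rho_\star$ is a global minimizer of $\mathscr L$ over $\mathbb C^N$.
   Context: For $\mathbf u\in\mathbb C^N$ and $T\subset\{1,\dots,N\}$, $\mathbf u_T\in\mathbb C^{|T|}$ denotes the restriction of $\mathbf u$ to the indices in $T$ (for $\boldsymbol\xi$ indexed by $\mathscr S$, $\boldsymbol\xi_{\mathcal S}$ is its restriction to $\mathcal S$), and $\mathcal G_T$ is the $M\times|T|$ submatrix of $\mathcal G$ with columns $\mathbf g_j$, $j\in T$. $^H$ denotes conjugate transpose, $^\dagger$ the Moore–Penrose pseudo-inverse, and $\mathcal P_{\mathscr S}=\mathcal G_{\mathscr S}\mathcal G_{\mathscr S}^\dagger$ the orthogonal projection onto the range of $\mathcal G_{\mathscr S}$. Subdifferential of the $\ell_1$ norm at $\mathbf u\in\mathbb C^n$: $\partial\|\mathbf u\|_1=\{\boldsymbol\xi\in\mathbb C^n:\ \xi_i=u_i/|u_i|\text{ if }u_i\neq0,\ |\xi_i|\le1\text{ if }u_i=0\}$. *)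

(* Defs.v *)
(* The complex field is modelled by an arbitrary
   numClosedFieldType C (e.g. algC). *)
From HB Require Import structures.
From mathcomp Require Import all_boot all_order all_algebra.
Set Implicit Arguments. Unset Strict Implicit. Unset Printing Implicit Defensive.
Import Order.TTheory GRing.Theory Num.Theory.
Local Open Scope ring_scope.

Section Defs.
Variable C : numClosedFieldType.

Definition ctrmx m n (A : 'M[C]_(m, n)) : 'M[C]_(n, m) :=
  \matrix_(i, j) Num.conj (A j i).

Definition colsubset m n (T : {set 'I_n}) (G : 'M[C]_(m, n)) : 'M[C]_(m, #|T|) :=
  \matrix_(i, k) G i (enum_val k).

Definition restr n (T : {set 'I_n}) (u : 'cV[C]_n) : 'cV[C]_#|T| :=
  \col_k u (enum_val k) 0.

Definition extend n (T : {set 'I_n}) (v : 'cV[C]_#|T|) : 'cV[C]_n :=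
  \col_j \sum_(k < #|T|) (if enum_val k == j then v k 0 else 0).

Definition norm1 n (u : 'cV[C]_n) : C := \sum_i `|u i 0|.
Definition norm2sq n (u : 'cV[C]_n) : C := \sum_i `|u i 0| ^+ 2.
Definition norminf n (u : 'cV[C]_n) : C := \big[Num.max/0]_i `|u i 0|.

(* Moore-Penrose pseudo-inverse, via the Penrose equations *)
Definition is_pinv m n (A : 'M[C]_(m, n)) (X : 'M[C]_(n, m)) : Prop :=
  [/\ A *m X *m A = A, X *m A *m X = X,
      ctrmx (A *m X) = A *m X & ctrmx (X *m A) = X *m A].

Definition in_subdiff_l1 n (u xi : 'cV[C]_n) : Prop :=
  forall i, (u i 0 != 0 -> xi i 0 = u i 0 / `|u i 0|) /\
            (u i 0 = 0 -> `|xi i 0| <= 1).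

Definition lassoL m n (G : 'M[C]_(m, n)) (d : 'cV[C]_m) (gamma : C)
  (rho : 'cV[C]_n) : C :=
  2^-1 * norm2sq (G *m rho - d) + gamma * norm1 rho.

End Defs.

(* Main.v *)
Require Import Defs.
From HB Require Import structures.
From mathcomp Require Import all_boot all_order all_algebra ring.
Import Order.TTheory GRing.Theory Num.Theory.
Local Open Scope ring_scope.
Set Implicit Arguments. Unset Strict Implicit. Unset Printing Implicit Defensive.

Section H.
Variable C : numClosedFieldType.
Implicit Types x y z : C.

Lemma ctrmxE m n (A : 'M[C]_(m, n)) : ctrmx A = (map_mx Num.conj A)^T.
Proof. by apply/matrixP => i j; rewrite !mxE. Qed.

Lemma ctrmx_mul m n p (A : 'M[C]_(m, n)) (B : 'M[C]_(n, p)) :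
  ctrmx (A *m B) = ctrmx B *m ctrmx A.
Proof. by rewrite !ctrmxE map_mxM trmx_mul. Qed.

Lemma ctrmxK m n (A : 'M[C]_(m, n)) : ctrmx (ctrmx A) = A.
Proof. by apply/matrixP => i j; rewrite !mxE conjCK. Qed.

Lemma ctrmxD m n (A B : 'M[C]_(m, n)) : ctrmx (A + B) = ctrmx A + ctrmx B.
Proof. by apply/matrixP => i j; rewrite !mxE rmorphD. Qed.

Lemma ctrmxN m n (A : 'M[C]_(m, n)) : ctrmx (- A) = - ctrmx A.
Proof. by apply/matrixP => i j; rewrite !mxE rmorphN. Qed.

Lemma ctrmxZ m n a (A : 'M[C]_(m, n)) : ctrmx (a *: A) = a^* *: ctrmx A.
Proof. by apply/matrixP => i j; rewrite !mxE rmorphM. Qed.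

Lemma ctrmx1 n : ctrmx (1%:M : 'M[C]_n) = 1%:M.
Proof. by apply/matrixP => i j; rewrite !mxE eq_sym; case: eqP; rewrite ?conjC1 ?conjC0. Qed.

Definition dot m (u v : 'cV[C]_m) : C := (ctrmx u *m v) 0 0.

Lemma dotE m (u v : 'cV[C]_m) : dot u v = \sum_i (u i 0)^* * v i 0.
Proof. by rewrite /dot mxE; apply: eq_bigr => i _; rewrite mxE. Qed.

Lemma dotDr m (u v w : 'cV[C]_m) : dot u (v + w) = dot u v + dot u w.
Proof. by rewrite /dot mulmxDr mxE. Qed.
Lemma dotDl m (u v w : 'cV[C]_m) : dot (v + w) u = dot v u + dot w u.
Proof. by rewrite /dot ctrmxD mulmxDl mxE. Qed.
Lemma dotNr m (u v : 'cV[C]_m) : dot u (- v) = - dot u v.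
Proof. by rewrite /dot mulmxN mxE. Qed.
Lemma dotNl m (u v : 'cV[C]_m) : dot (- v) u = - dot v u.
Proof. by rewrite /dot ctrmxN mulNmx mxE. Qed.
Lemma dotBr m (u v w : 'cV[C]_m) : dot u (v - w) = dot u v - dot u w.
Proof. by rewrite dotDr dotNr. Qed.
Lemma dotBl m (u v w : 'cV[C]_m) : dot (v - w) u = dot v u - dot w u.
Proof. by rewrite dotDl dotNl. Qed.
Lemma dotZr m a (u v : 'cV[C]_m) : dot u (a *: v) = a * dot u v.
Proof. by rewrite /dot -scalemxAr mxE. Qed.
Lemma dotZl m a (u v : 'cV[C]_m) : dot (a *: v) u = a^* * dot v u.
Proof. by rewrite /dot ctrmxZ -scalemxAl mxE. Qed.
Lemma dotC m (u v : 'cV[C]_m) : dot v u = (dot u v)^*.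
Proof. by rewrite !dotE rmorph_sum; apply: eq_bigr => i _; rewrite rmorphM /= conjCK mulrC. Qed.
Lemma dotM m n (A : 'M[C]_(m, n)) u v : dot u (A *m v) = dot (ctrmx A *m u) v.
Proof. by rewrite /dot ctrmx_mul ctrmxK mulmxA. Qed.
Lemma dot_norm2sq m (u : 'cV[C]_m) : dot u u = norm2sq u.
Proof. by rewrite dotE; apply: eq_bigr => i _; rewrite normCKC. Qed.
Lemma dot_ge0 m (u : 'cV[C]_m) : 0 <= dot u u.
Proof. by rewrite dotE; apply: sumr_ge0 => i _; rewrite -normCKC exprn_ge0. Qed.

Lemma cs_unit m (g v : 'cV[C]_m) : dot g g = 1 -> `|dot g v| ^+ 2 <= dot v v.
Proof.
move=> g1; set s := dot g v.
have := dot_ge0 (v - s *: g).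
rewrite dotBl !dotBr !dotZl !dotZr g1 -/s mulr1 (dotC g v) -/s subrr subr0.
by rewrite normCK subr_ge0.
Qed.


Lemma proj_contract m (P : 'M[C]_m) (v : 'cV[C]_m) :
  ctrmx P = P -> P *m P = P ->
  dot ((1%:M - P) *m v) ((1%:M - P) *m v) <= dot v v.
Proof.
move=> hP iP; set Q := 1%:M - P.
have hQ : ctrmx Q = Q by rewrite /Q ctrmxD ctrmxN ctrmx1 hP.
have QP : Q *m P = 0 by rewrite /Q mulmxBl mul1mx iP subrr.
have PQ : P *m Q = 0 by rewrite /Q mulmxBr mulmx1 iP subrr.
have QQ : Q *m Q = Q by rewrite {1}/Q mulmxBl mul1mx PQ subr0.
have ev : v = Q *m v + P *m v by rewrite /Q mulmxBl mul1mx subrK.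
rewrite {3 4}ev dotDl !dotDr.
have -> : dot (Q *m v) (P *m v) = 0 by rewrite dotM mulmxA hP PQ mul0mx /dot ctrmxE map_mx0 trmx0 mul0mx mxE.
have -> : dot (P *m v) (Q *m v) = 0 by rewrite dotM mulmxA hQ QP mul0mx /dot ctrmxE map_mx0 trmx0 mul0mx mxE.
by rewrite addr0 add0r lerDl dot_ge0.
Qed.


Lemma close_cols m (gl gq : 'cV[C]_m) r : dot gl gl = 1 -> dot gq gq = 1 ->
  r < 1 -> 1 - r < `|dot gq gl| ->
  exists c, dot (gl - c *: gq) (gl - c *: gq) <= 2 * r.
Proof.
move=> hl hq r1 ht; set t := dot gq gl.
have n0 : 0 < `|t| by apply: lt_trans ht; rewrite subr_gt0.
have nn0 : `|t| != 0 by rewrite gt_eqF.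
have tt : t * t^* = `|t| ^+ 2 by rewrite normCK.
exists (t / `|t|).
rewrite dotBl !dotBr !dotZl !dotZr hl hq mulr1 -/t (dotC gq gl) -/t.
have cv : (t / `|t|)^* = t^* / `|t|.
  by rewrite rmorphM /= rmorphV ?unitfE //; congr (_ * _^-1); exact: conj_normC.
rewrite cv.
have -> : t / `|t| * t^* = `|t| by rewrite mulrAC tt expr2 mulfK.
have -> : t^* / `|t| * t = `|t| by rewrite mulrAC [t^* * t]mulrC tt expr2 mulfK.
have -> : t^* / `|t| * (t / `|t|) = 1.
  by rewrite mulrACA [t^* * t]mulrC tt -invfM -expr2 mulfV // expf_neq0.
have -> : 1 - `|t| - (`|t| - 1) = 2 * (1 - `|t|) by ring.
rewrite ler_pM2l //; apply: ltW.
by rewrite ltrBlDl -ltrBlDr.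
Qed.


Lemma qbound m (P : 'M[C]_m) (gj gl gq : 'cV[C]_m) r :
  ctrmx P = P -> P *m P = P -> P *m gq = gq ->
  dot gj gj = 1 -> dot gl gl = 1 -> dot gq gq = 1 -> r < 1 ->
  1 - r < `|dot gq gl| ->
  `|dot gj ((1%:M - P) *m gl)| <= sqrtC (2 * r).
Proof.
move=> hP iP Pq hj hl hq r1 ht.
have [c hc] := close_cols hl hq r1 ht.
have e : (1%:M - P) *m gl = (1%:M - P) *m (gl - c *: gq).
  by rewrite mulmxBr -scalemxAr [(1%:M - P) *m gq]mulmxBl mul1mx Pq subrr scaler0 subr0.
have h1 := cs_unit ((1%:M - P) *m gl) hj.
have h2 := proj_contract (gl - c *: gq) hP iP.
rewrite -e in h2.
have h3 := le_trans h1 (le_trans h2 hc).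
have r0 : 0 <= 2 * r by apply: le_trans h3; apply: exprn_ge0.
rewrite -(ler_pXn2r (_ : (0 < 2)%N)) ?sqrtCK //.
  by rewrite qualifE /=.
by rewrite qualifE /= sqrtC_ge0.
Qed.


Lemma Re_le_norm z : 'Re z <= `|z|.
Proof. exact: (leif_Re_Creal z). Qed.

Lemma scal_conv (g xi x y : C) : 0 < g -> `|xi| <= 1 ->
  (x != 0 -> xi = x / `|x|) ->
  0 <= 'Re ((- g * xi)^* * (y - x)) + g * (`|y| - `|x|).
Proof.
move=> g0 hxi hx.
have gr : g \is Num.real by apply: gtr0_real.
have cx : xi^* * x = `|x|.
  have [->|x0] := eqVneq x 0; first by rewrite mulr0 normr0.
  rewrite (hx x0) rmorphM /= -mulrA mulrC -mulrA.
  have -> : (`|x|^-1)^* = `|x|^-1.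
    by apply: conj_Creal; rewrite realV; apply: normr_real.
  by rewrite -normCK expr2 mulKf // normr_eq0.
have e : (- g * xi)^* * (y - x) = - g * (xi^* * y) + g * `|x|.
  rewrite rmorphM rmorphN /= conj_Creal // -cx; ring.
rewrite e raddfD /= ReMl ?rpredN // ReMl //.
have -> : 'Re `|x| = `|x| by apply/Creal_ReP; apply: normr_real.
have : 'Re (xi^* * y) <= `|y|.
  apply: le_trans (Re_le_norm _) _; rewrite normrM norm_conjC.
  by rewrite -{2}(mul1r `|y|) ler_wpM2r.
move=> h.
have -> : - g * 'Re (xi^* * y) + g * `|x| + g * (`|y| - `|x|) = g * (`|y| - 'Re (xi^* * y)) by ring.
  by apply: mulr_ge0; [apply: ltW | rewrite subr_ge0].
by rewrite rpredN.
Qed.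


Lemma bigmax_ge (I : eqType) (r : seq I) (P : pred I) (F : I -> C) (x : I) :
  (forall i, 0 <= F i) -> x \in r -> P x ->
  F x <= \big[Num.max/0]_(i <- r | P i) F i.
Proof.
move=> F0.
suff : 0 <= \big[Num.max/0]_(i <- r | P i) F i /\
   (x \in r -> P x -> F x <= \big[Num.max/0]_(i <- r | P i) F i) by case.
elim: r => [|a r [IH0 IH]]; first by rewrite big_nil.
rewrite big_cons; case: ifP => Pa; last first.
  by split => // ; rewrite in_cons => /orP[/eqP ->|]; [rewrite Pa | apply: IH].
set b := \big[_/_]_(i <- r | P i) F i in IH0 IH *.
rewrite maxElt; case: ifP => h.
- split => //; rewrite in_cons => /orP[/eqP ->|]; [by move=> _; apply: ltW | exact: IH].
- have h' : b <= F a.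
    by move/negbT: h; rewrite -real_leNgt // ger0_real.
  split => //; rewrite in_cons => /orP[/eqP -> //|xr Px].
  exact: le_trans (IH xr Px) h'.
Qed.


Lemma ctrmx_mul_entry m n (A : 'M[C]_(m, n)) (z : 'cV[C]_m) j :
  (ctrmx A *m z) j 0 = dot (col j A) z.
Proof. by rewrite dotE mxE; apply: eq_bigr => i _; rewrite !mxE. Qed.

Lemma col_colsubset m n (T : {set 'I_n}) (G : 'M[C]_(m, n)) k :
  col k (colsubset T G) = col (enum_val k) G.
Proof. by apply/matrixP => i j; rewrite !mxE. Qed.

Lemma extend_ev n (T : {set 'I_n}) (v : 'cV[C]_#|T|) k :
  extend v (enum_val k) 0 = v k 0.
Proof.
rewrite mxE (bigD1 k) //= eqxx big1 ?addr0 // => k' nk.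
by rewrite (inj_eq enum_val_inj) (negbTE nk).
Qed.

Lemma colsub_mul m n (T : {set 'I_n}) (G : 'M[C]_(m, n)) (rho : 'cV[C]_n) :
  (forall j, j \notin T -> rho j 0 = 0) ->
  G *m rho = colsubset T G *m restr T rho.
Proof.
move=> supp; apply/matrixP => i k; rewrite !mxE (bigID (fun j => j \in T)) /=.
rewrite [X in _ + X]big1 ?addr0; last by move=> j /supp; rewrite (ord1 k) => ->; rewrite mulr0.
rewrite (big_enum_val (fun j => G i j * rho j k)) /=.
by apply: eq_bigr => l _; rewrite !mxE (ord1 k).
Qed.

Lemma colsub_sum m n (T : {set 'I_n}) (G : 'M[C]_(m, n)) (e : 'cV[C]_#|T|) :
  colsubset T G *m e = \sum_k e k 0 *: col (enum_val k) G.
Proof.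
apply/matrixP => i j; rewrite !mxE summxE; apply: eq_bigr => k _.
by rewrite !mxE (ord1 j) mulrC.
Qed.


Lemma dot_sumr m I (r : seq I) (P : pred I) (u : 'cV[C]_m) (F : I -> 'cV[C]_m) :
  dot u (\sum_(i <- r | P i) F i) = \sum_(i <- r | P i) dot u (F i).
Proof. by rewrite /dot mulmx_sumr summxE. Qed.

End H.

Unset Implicit Arguments.
Theorem lemma4 (C : numClosedFieldType) (M N : nat)
  (G : 'M[C]_(M, N)) (d : 'cV[C]_M) (gamma : C)
  (SS Scal : {set 'I_N}) (r : C)
  (X : 'M[C]_(#|SS|, M)) (Y : 'M[C]_(#|Scal|, M))
  (rho_star : 'cV[C]_N) (xi : 'cV[C]_#|SS|) :
  (forall j : 'I_N, \sum_i `|G i j| ^+ 2 = 1) ->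
  0 < gamma ->
  Scal \subset SS ->
  \rank (colsubset Scal G) = #|Scal| ->
  0 < r < 1 ->
  (forall l, l \in SS -> exists2 q, q \in Scal &
     1 - r < `|\sum_i Num.conj (G i q) * G i l|) ->
  is_pinv (colsubset SS G) X ->
  is_pinv (colsubset Scal G) Y ->
  (forall j, j \notin SS -> rho_star j 0 = 0) ->
  (forall rho : 'cV[C]_N, (forall j, j \notin SS -> rho j 0 = 0) ->
     lassoL G d gamma rho_star <= lassoL G d gamma rho) ->
  in_subdiff_l1 (restr SS rho_star) xi ->
  ctrmx (colsubset SS G) *m colsubset SS G *m (restr SS rho_star - X *m d)
    + gamma *: xi = 0 ->
  sqrtC (2 * r) * norm1 (restr SS rho_star - X *m d)
    + norminf (ctrmx (colsubset (~: SS) G) *m (colsubset SS G *m X *m d - d))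
  < gamma * (1 - \big[Num.max/0]_(j in ~: SS)
       `|(ctrmx (restr Scal (extend xi)) *m Y *m col j G) 0 0|) ->
  forall rho : 'cV[C]_N, lassoL G d gamma rho_star <= lassoL G d gamma rho.
Proof.
move=> hcol g0 sub _ /andP[r0 r1] close [X1 X2 X3 X4] [Y1 Y2 Y3 Y4] supp _ sd kkt ineq.
set GS := colsubset SS G in X1 X2 X3 X4 kkt ineq.
set GC := colsubset Scal G in Y1 Y2 Y3 Y4 ineq.
set rS := restr SS rho_star in sd kkt ineq.
set res := G *m rho_star - d.
have unit j : dot (col j G) (col j G) = 1.
  by rewrite dot_norm2sq -(hcol j); apply: eq_bigr => i _; rewrite mxE.
have hres : res = GS *m rS - d by rewrite /res (colsub_mul G supp).
have hGX : ctrmx GS *m GS *m X = ctrmx GS.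
  by rewrite -mulmxA -X3 -ctrmx_mul X1.
have kkt' : ctrmx GS *m res = - gamma *: xi.
  apply/eqP; rewrite scaleNr -addr_eq0 -kkt hres mulmxBr mulmxBr mulmxA.
  by rewrite !mulmxA hGX.
set a := fun j => dot (col j G) res.
set e := rS - X *m d.
set w := GS *m e.
set z := GS *m X *m d - d.
have hrw : res = w + z by rewrite hres /w /z /e mulmxBr mulmxA addrA subrK.
have hz : ctrmx GS *m z = 0 by rewrite /z mulmxBr !mulmxA hGX subrr.
have hw : ctrmx GS *m w = - gamma *: xi by rewrite -kkt' hrw mulmxDr hz addr0.
set xiS := restr Scal (extend xi).
have hGCw : ctrmx GC *m w = - gamma *: xiS.
  apply/matrixP => k i; rewrite (ord1 i) ctrmx_mul_entry col_colsubset.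
  rewrite [RHS]mxE [xiS _ _]mxE.
  have qS : enum_val k \in SS by apply: (subsetP sub); apply: enum_valP.
  rewrite -(enum_rankK_in qS qS) -col_colsubset -ctrmx_mul_entry hw extend_ev.
  by rewrite mxE.
set P := GC *m Y.
have iP : P *m P = P by rewrite /P mulmxA Y1.
have PGC : P *m GC = GC by rewrite /P Y1.
have bound : forall j, j \notin SS -> `|a j| < gamma.
  move=> j jS.
  have ew : w = P *m w + (1%:M - P) *m w by rewrite mulmxBl mul1mx addrC subrK.
  have ea : a j = dot (col j G) (P *m w) + dot (col j G) ((1%:M - P) *m w)
      + dot (col j G) z by rewrite /a hrw {1}ew !dotDr.
  set MX := \big[Num.max/0]_(j in ~: SS)
       `|(ctrmx (restr Scal (extend xi)) *m Y *m col j G) 0 0|.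
  have T1 : `|dot (col j G) (P *m w)| <= gamma * MX.
    have -> : P = ctrmx Y *m ctrmx GC by rewrite -ctrmx_mul Y3.
    rewrite -mulmxA dotM ctrmxK hGCw dotZr normrM (dotC xiS).
    rewrite norm_conjC normrN (gtr0_norm g0); apply: ler_wpM2l; first exact: ltW.
    rewrite /MX /dot mulmxA.
    apply: (bigmax_ge (r := index_enum 'I_N) (P := fun j0 => j0 \in ~: SS) (F := fun j0 => `|(ctrmx xiS *m Y *m col j0 G) 0 0|)).
    - by move=> i; apply: normr_ge0.
    - by apply: mem_index_enum.
    - by rewrite in_setC.
  have T2 : `|dot (col j G) ((1%:M - P) *m w)| <= sqrtC (2 * r) * norm1 e.
    rewrite /w colsub_sum mulmx_sumr dot_sumr.
    apply: le_trans (ler_norm_sum _ _ _) _.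
    rewrite /norm1 mulr_sumr; apply: ler_sum => k _.
    rewrite -scalemxAr dotZr normrM mulrC; apply: ler_wpM2r; first exact: normr_ge0.
    have lS : enum_val k \in SS by apply: enum_valP.
    have [q qSc hq] := close _ lS.
    apply: (qbound (gq := col q G)) => //.
    - have -> : col q G = GC *m delta_mx (enum_rank_in qSc q) 0.
        by rewrite -colE col_colsubset enum_rankK_in.
      by rewrite mulmxA PGC.
    - by rewrite dotE; move: hq; congr (_ < `|_|); apply: eq_bigr => i _; rewrite !mxE.
  have T3 : `|dot (col j G) z| <= norminf (ctrmx (colsubset (~: SS) G) *m z).
    have jC : j \in ~: SS by rewrite in_setC.
    rewrite -(enum_rankK_in jC jC) -col_colsubset -ctrmx_mul_entry /norminf.
    apply: (bigmax_ge (r := index_enum _) (P := fun _ => true)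
       (F := fun i => `|(ctrmx (colsubset (~: SS) G) *m z) i 0|)).
    all: try by [move=> i; apply: normr_ge0 | apply: mem_index_enum]. by [].
  have H : `|a j| <= gamma * MX + (sqrtC (2 * r) * norm1 e
              + norminf (ctrmx (colsubset (~: SS) G) *m z)).
    rewrite ea; apply: le_trans (ler_normD _ _) _.
    rewrite addrA; apply: lerD T3; apply: le_trans (ler_normD _ _) _.
    exact: lerD T1 T2.
  apply: le_lt_trans H _.
  apply: lt_le_trans (_ : _ < gamma * MX + gamma * (1 - MX)) _.
    by rewrite ltrD2l.
  by rewrite mulrBr mulr1 addrC subrK.
have exA : forall j, exists xj, a j = - gamma * xj /\ `|xj| <= 1 /\
    (rho_star j 0 != 0 -> xj = rho_star j 0 / `|rho_star j 0|).
  move=> j; case: (boolP (j \in SS)) => jS.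
  - set k := enum_rank_in jS j.
    have ek : enum_val k = j := enum_rankK_in jS jS.
    exists (xi k 0).
    have hrk : rS k 0 = rho_star j 0 by rewrite /rS mxE ek.
    have [sd1 sd2] := sd k; rewrite hrk in sd1 sd2.
    split; first by rewrite /a -ek -col_colsubset -ctrmx_mul_entry kkt' mxE.
    split => //.
    have [h0|h0] := eqVneq (rho_star j 0) 0; first exact: sd2.
    by rewrite (sd1 h0) normf_div normr_id divff // normr_eq0.
  - exists (- a j / gamma); have aj := bound _ jS.
    split; first by field; rewrite gt_eqF.
    split; last by rewrite supp // eqxx.
    rewrite normf_div normrN (gtr0_norm g0) ler_pdivrMr // mul1r; exact: ltW.
move=> rho; set h := rho - rho_star.
have eG : res + G *m h = G *m rho - d by rewrite /h mulmxBr /res addrC addrA subrK.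
set zz := dot res (G *m h).
have E2 : norm2sq (res + G *m h) = dot res res + zz + (zz^* + dot (G *m h) (G *m h)).
  by rewrite -dot_norm2sq dotDl (dotDr res) (dotDr (G *m h)) (dotC res (G *m h)).
rewrite /lassoL -eG E2 -/res -(dot_norm2sq res).
have key : 0 <= 'Re zz + gamma * (norm1 rho - norm1 rho_star).
  rewrite /zz dotM dotE raddf_sum /norm1 -sumrB mulr_sumr -big_split /=.
  apply: sumr_ge0 => j _.
  have [xj [aj [xj1 xjr]]] := exA j.
  rewrite ctrmx_mul_entry -/(a j) aj /h !mxE.
  exact: scal_conv.
rewrite -subr_ge0.
have -> : 2^-1 * (dot res res + zz + (zz^* + dot (G *m h) (G *m h))) + gamma * norm1 rho -
   (2^-1 * dot res res + gamma * norm1 rho_star) =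
   2^-1 * dot (G *m h) (G *m h) + ('Re zz + gamma * (norm1 rho - norm1 rho_star)).
  by rewrite ReE; field.
apply: addr_ge0 key; apply: mulr_ge0 (dot_ge0 _).
by rewrite invr_ge0 ler0n.
Qed.
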